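(* Let $|X|=4$ and let $\sigma^+$ be a rooted binary metric species tree on $X$. Then the unrooted metric species tree $\sigma^-$ is identifiable from $\mathbb P_{\sigma^+}$: whenever $\sigma_1^+,\sigma_2^+$ are rooted binary metric species trees on $X$ with $\mathbb P_{\sigma_1^+}=\mathbb P_{\sigma_2^+}$, one has $\sigma_1^-=\sigma_2^-$. However, $\sigma^+$ is not identifiable from $\mathbb P_{\sigma^+}$: there exist rooted binary metric species trees $\sigma_1^+\ne\sigma_2^+$ on $X$ with $\mathbb P_{\sigma_1^+}=\mathbb P_{\sigma_2^+}$.
   Context: Let $X$ be a finite set of $n$ taxa. A rooted binary metric species tree on $X$ is a pair $\sigma^+=(\psi^+,\lambda^+)$. Here $\psi^+$ is a rooted binary tree topology with leaves bijectively labeled by $X$, and $\lambda^+$ gives strictly positive lengths, in coalescent units, to its $n-2$ internal edges. Pendant edge lengths are unspecified. Multispecies coalescent model, one lineage per taxon. One gene lineage starts at each leaf, and no coalescence occurs on pendant edges. Going backward in time, in each internal edge (population), the lineages entering from the child edges coalesce pairwise at rate 1 each (total rate $\binom{i}{2}$ with $i$ lineages, merging pair uniformly random) for a time equal to the edge length. Above the root, lineages coalesce in the same way until one remains. The resulting rooted gene tree, with its root forgotten, is an unrooted binary leaf-labeled topology. $\mathbb P_{\sigma^+}$ is the induced distribution on the set $\mathcal T_X$ of unrooted binary leaf-labeled topologies on $X$. The unrooted metric species tree $\sigma^-=(\psi^-,\lambda^-)$ is obtained by suppressing the root of $\sigma^+$: - If the root is incident to two internal edges, they merge into one internal edge whose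 length is the sum. - If the root is incident to a pendant edge, the merged edge is pendant and has no length. - Other internal edge lengths are kept. *)

(* Defs.v *)
From Stdlib Require Import Reals.
From Coquelicot Require Import Coquelicot.
From mathcomp Require Import all_boot.

Set Implicit Arguments.
Unset Strict Implicit.
Unset Printing Implicit Defensive.

Local Open Scope R_scope.
Section MSC.
Variable X : finType.

Definition sumR {T : Type} (s : seq T) (f : T -> R) : R :=
  foldr (fun x acc => Rplus (f x) acc) 0 s.

Definition b2R (b : bool) : R := if b then 1 else 0.

(* A rooted binary tree topology on X is encoded by its set of clusters
   (leaf sets below each node): X itself (the root), all singletons (leaves),
   pairwise compatible, and every non-leaf cluster is the disjoint union of two
   (nonempty) clusters of the hierarchy (its two children). *)
Definition rooted_binary (H : {set {set X}}) : Prop :=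
  [/\ setT \in H,
      (forall x : X, [set x] \in H),
      set0 \notin H,
      (forall A B, A \in H -> B \in H ->
          [|| A \subset B, B \subset A | [disjoint A & B]]) &
      (forall C, C \in H -> (1 < #|C|)%N ->
          exists A B, [/\ A \in H, B \in H, [disjoint A & B] & A :|: B = C])].

(* internal edges of the rooted tree: the edge above each non-root, non-leaf
   node, identified with the cluster of that node *)
Definition internal_edge (H : {set {set X}}) (C : {set X}) : bool :=
  [&& C \in H, (1 < #|C|)%N & C != setT].

(* rooted metric species tree: topology + lengths of internal edges
   (values of len on non-internal clusters are irrelevant) *)
Record rmtree := RMTree { rtop : {set {set X}} ; rlen : {set X} -> R }.

Definition valid_rmtree (s : rmtree) : Prop :=
  rooted_binary (rtop s) /\
  (forall C, internal_edge (rtop s) C -> (0 < rlen s C)).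

Definition rmtree_eq (s1 s2 : rmtree) : Prop :=
  rtop s1 = rtop s2 /\
  (forall C, internal_edge (rtop s1) C -> rlen s1 C = rlen s2 C).

(* a split A|X\A is encoded as the unordered pair [set A; ~: A] *)
Definition split_of (A : {set X}) : {set {set X}} := [set A; ~: A].

(* the nontrivial splits (both sides of size >= 2) displayed by a rooted
   hierarchy: this is its unrooted topology (root suppressed) *)
Definition unroot (G : {set {set X}}) : {set {set {set X}}} :=
  [set split_of A | A in G & (1 < #|A|)%N && (1 < #|~: A|)%N].

Definition internal_edges (H : {set {set X}}) : seq {set X} :=
  enum [set C | internal_edge H C].

(* length of an internal edge (split S) of the unrooted tree sigma^-:
   the sum of the lengths of the rooted internal edges inducing S (two edges
   are merged when the root is incident to two internal edges) *)
Definition ulen (s : rmtree) (S : {set {set X}}) : R :=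
  sumR (internal_edges (rtop s))
       (fun C => if split_of C == S then rlen s C else 0).

Definition unrooted_eq (s1 s2 : rmtree) : Prop :=
  unroot (rtop s1) = unroot (rtop s2) /\
  (forall S, S \in unroot (rtop s1) -> ulen s1 S = ulen s2 S).

(* state: (current gene lineages, each given by its leaf cluster;
           set of all gene-tree clusters formed so far) *)
Definition state := ({set {set X}} * {set {set X}})%type.

Definition lineages_in (s : state) (C : {set X}) : {set {set X}} :=
  [set A in s.1 | A \subset C].

Definition pairs_in (s : state) (C : {set X}) : seq {set {set X}} :=
  enum [set p : {set {set X}} | (#|p| == 2)%N && (p \subset lineages_in s C)].

Definition merge (s : state) (p : {set {set X}}) : state :=
  let U := \bigcup_(A in p) A in (U |: (s.1 :\: p), U |: s.2).

Definition rate (s : state) (C : {set X}) : R :=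
  INR 'C(#|lineages_in s C|, 2).

(* probability that, in population C run for time t starting from state s,
   the process ends in state s'.  Each pair coalesces at rate 1
   (first-step / backward integral equation); n is fuel (#|X| suffices). *)
Fixpoint ptrans (n : nat) (C : {set X}) (t : R) (s s' : state) : R :=
  match n with
  | 0 => (b2R (s == s') * exp (- rate s C * t))
  | n'.+1 =>
      (b2R (s == s') * exp (- rate s C * t) +
       sumR (pairs_in s C)
         (fun p => RInt (fun u => exp (- rate s C * u) *
                                  ptrans n' C (t - u) (merge s p) s') 0 t))
  end.

(* above the root: coalesce until one lineage remains; the merging pair is
   uniformly random at each step *)
Fixpoint proot (n : nat) (s s' : state) : R :=
  match n with
  | 0 => b2R (s == s')
  | n'.+1 =>
      if pairs_in s setT is [::] then b2R (s == s')
      else sumR (pairs_in s setT)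
             (fun p => (/ rate s setT * proot n' (merge s p) s'))
  end.

Definition all_states : seq state := enum [set: state].

(* populations processed children-before-parents (by increasing cluster
   size); then the root population *)
Fixpoint run (Es : seq {set X}) (len : {set X} -> R) (s sf : state) : R :=
  match Es with
  | [::] => proot #|X| s sf
  | C :: Es' => sumR all_states
                  (fun s' => (ptrans #|X| C (len C) s s' * run Es' len s' sf))
  end.

(* initial state: one lineage per taxon, no coalescence on pendant edges *)
Definition init_state : state :=
  ([set [set x] | x : X], [set [set x] | x : X]).

(* P_{sigma^+}(T): probability that the unrooted gene tree topology is T *)
Definition msc_prob (s : rmtree) (T : {set {set {set X}}}) : R :=
  let Es := sort (fun A B : {set X} => (#|A| <= #|B|)%N) (internal_edges (rtop s)) in
  sumR all_states
    (fun sf => (run Es (rlen s) init_state sf * b2R (unroot sf.2 == T))).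

End MSC.

(* Main.v *)
From HB Require Import structures.
Require Import Defs.
From Stdlib Require Import Reals Lra.
From Coquelicot Require Import Coquelicot.
From mathcomp Require Import all_boot zify.
From Stdlib Require Import Lia.
Set Implicit Arguments. Unset Strict Implicit. Unset Printing Implicit Defensive.
Local Open Scope R_scope.

HB.instance Definition _ := Monoid.isComLaw.Build R 0 Rplus (fun a b c => esym (Rplus_assoc a b c)) Rplus_comm Rplus_0_l.
Lemma cont_ex_RInt (f : R -> R) a b : (forall x, continuous f x) -> ex_RInt f a b.
Proof. intros H; apply (@ex_RInt_continuous R_CompleteNormedModule); intros; apply H. Qed.

Lemma cont_expl (c : R) x : continuous (fun v => exp (c * v)) x.
Proof. apply (@ex_derive_continuous R_AbsRing R_NormedModule). auto_derive. auto. Qed.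

Lemma cont_shift (P : R -> R) t x : (forall y, continuous P y) -> continuous (fun u => P (t - u)) x.
Proof.
intros HP. apply (continuous_comp (fun u => t - u) P).
- apply (@ex_derive_continuous R_AbsRing R_NormedModule). auto_derive. auto.
- apply HP.
Qed.

Lemma conv_cont (P : R -> R) (r : R) :
  (forall x, continuous P x) ->
  forall t, continuous (fun t => RInt (fun u => exp (- r * u) * P (t - u)) 0 t) t.
Proof.
intros HP t0.
pose (G := fun v => exp (r * v) * P v).
assert (HG : forall x, continuous G x).
{ intros x; unfold G. apply (continuous_mult (fun v => exp (r*v)) P).
  - apply cont_expl.
  - apply HP. }
assert (Hg : continuous (fun t => RInt G 0 t) t0).
{ apply (continuous_RInt_1 G 0 t0). apply filter_forall. intros z.
  apply (@RInt_correct R_CompleteNormedModule). apply cont_ex_RInt; auto. }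
assert (Heq : forall t, RInt (fun u => exp (- r * u) * P (t - u)) 0 t = exp (- r * t) * RInt G 0 t).
{ intros t.
  pose (f := fun v => exp (- r * t) * G v).
  assert (Hf : forall x, continuous f x).
  { intros x. unfold f. apply (continuous_mult (fun _ => exp (-r*t)) G).
    apply continuous_const. apply HG. }
  assert (Hc : forall x, continuous (fun u => exp (- r * u) * P (t - u)) x).
  { intros x. apply (continuous_mult (fun u => exp (-r*u)) (fun u => P (t-u))).
    - apply cont_expl.
    - apply cont_shift; auto. }
  assert (H1 := RInt_comp_lin f (-1) t 0 t (cont_ex_RInt _ _ Hf)).
  replace (-1 * 0 + t) with t in H1 by ring.
  replace (-1 * t + t) with 0 in H1 by ring.
  assert (E1 : RInt f t 0 = - RInt f 0 t).
  { rewrite -(opp_RInt_swap f 0 t). reflexivity. apply cont_ex_RInt; auto. }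
  assert (E2 : RInt f 0 t = exp (- r * t) * RInt G 0 t).
  { unfold f. apply (RInt_scal G 0 t (exp (-r*t))). apply cont_ex_RInt; auto. }
  assert (E3 : RInt (fun y : R => scal (-1) (f (-1 * y + t))) 0 t
             = opp (RInt (fun u => exp (- r * u) * P (t - u)) 0 t)).
  { rewrite -(RInt_opp (V:=R_CompleteNormedModule)). 2: apply cont_ex_RInt; auto.
    apply RInt_ext. intros x _. unfold f, G, scal, opp; simpl. unfold mult; simpl.
    replace (-1 * x + t) with (t - x) by ring.
    replace (r * (t - x)) with (r * t + - r * x) by ring.
    rewrite exp_plus.
    replace (- r * t) with (- (r * t)) by ring. rewrite exp_Ropp.
    field. apply Rgt_not_eq, exp_pos. }
  assert (H2 : opp (RInt (fun u => exp (- r * u) * P (t - u)) 0 t) = RInt f t 0) by (rewrite -E3; exact H1).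
  rewrite E1 E2 /opp /= in H2. lra. }
eapply continuous_ext. intros t; symmetry; apply Heq.
apply (continuous_mult (fun t => exp (-r*t)) (fun t => RInt G 0 t)).
- apply cont_expl.
- exact Hg.
Qed.

Lemma RInt_exp_const (r c t : R) : r <> 0 ->
  RInt (fun u => exp (- r * u) * c) 0 t = c * (1 - exp (- r * t)) / r.
Proof.
intros Hr.
apply is_RInt_unique.
assert (H := @is_RInt_derive R_CompleteNormedModule (fun u => - c * exp (- r * u) / r) (fun u => exp (- r * u) * c) 0 t).
replace (c * (1 - exp (- r * t)) / r) with (minus (- c * exp (- r * t) / r) (- c * exp (- r * 0) / r)).
2:{ rewrite /minus /plus /opp /=. replace (- r * 0) with 0 by ring. rewrite exp_0. field. auto. }
apply H.
- intros x _. auto_derive. auto. field. auto.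
- intros x _. apply: (@ex_derive_continuous R_AbsRing R_NormedModule). auto_derive. auto.
Qed.

Lemma sumR_nil (T : Type) (f : T -> R) : sumR [::] f = 0.
Proof. by []. Qed.
Lemma sumR_cons (T : Type) (x : T) l (f : T -> R) : sumR (x :: l) f = f x + sumR l f.
Proof. by []. Qed.
Lemma sumR_ext (T : Type) (l : seq T) (f g : T -> R) : (forall x, f x = g x) -> sumR l f = sumR l g.
Proof. move=> H; elim: l => //= x l ->; by rewrite H. Qed.
Lemma sumR_ext_in (T : eqType) (l : seq T) (f g : T -> R) :
  (forall x, x \in l -> f x = g x) -> sumR l f = sumR l g.
Proof.
elim: l => //= x l IH H; rewrite H ?mem_head // IH // => y Hy; apply: H; by rewrite in_cons Hy orbT.
Qed.
Lemma sumR_add (T : Type) (l : seq T) (f g : T -> R) :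
  sumR l (fun x => f x + g x) = sumR l f + sumR l g.
Proof. elim: l => /= [|x l ->]; lra. Qed.
Lemma sumR_mull (T : Type) (l : seq T) c (f : T -> R) :
  sumR l (fun x => c * f x) = c * sumR l f.
Proof. elim: l => /= [|x l ->]; lra. Qed.
Lemma sumR_mulr (T : Type) (l : seq T) c (f : T -> R) :
  sumR l (fun x => f x * c) = sumR l f * c.
Proof. elim: l => /= [|x l ->]; lra. Qed.
Lemma sumR_swap (T U : Type) (l : seq T) (m : seq U) (F : T -> U -> R) :
  sumR l (fun x => sumR m (fun y => F x y)) = sumR m (fun y => sumR l (fun x => F x y)).
Proof.
elim: l => /= [|x l ->]; first by elim: m => //= y m <-; lra.
by rewrite -sumR_add.
Qed.
Lemma sumR_const (T : Type) (l : seq T) c : sumR l (fun _ => c) = INR (size l) * c.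
Proof. elim: l => [|x l IH]; first by rewrite /=; lra. rewrite sumR_cons IH -[size (x :: l)]/(size l).+1 S_INR; lra. Qed.
Lemma sumR_delta (T : eqType) (l : seq T) a (f : T -> R) : uniq l -> a \in l ->
  sumR l (fun x => b2R (a == x) * f x) = f a.
Proof.
elim: l => //= x l IH /andP[xl ul]; rewrite in_cons; case: eqP => [->|ne] /= Ha.
- rewrite (@sumR_ext_in _ _ _ (fun _ => 0)); first by rewrite sumR_const /b2R; lra.
  move=> y Hy; case: eqP => [ey|]; last by rewrite /b2R; lra.
  by rewrite ey Hy in xl.
- rewrite IH // /b2R; lra.
Qed.
Lemma sumR_b2R (T : Type) (l : seq T) (P : pred T) : sumR l (fun x => b2R (P x)) = INR (count P l).
Proof. elim: l => [|x l IH]; first by rewrite /=; lra. rewrite sumR_cons IH [count _ (x :: l)]/=. case: (P x); rewrite /b2R ?add1n ?add0n ?S_INR; lra. Qed.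
Lemma sumR_perm (T : eqType) (l1 l2 : seq T) (f : T -> R) : perm_eq l1 l2 -> sumR l1 f = sumR l2 f.
Proof.
have E : forall l, sumR l f = \big[Rplus/0]_(x <- l) f x.
  by elim=> [|x l IH] /=; [rewrite big_nil | rewrite big_cons IH].
by move=> H; rewrite !E; apply: perm_big.
Qed.
Lemma sumR_map (T U : Type) (g : T -> U) (l : seq T) (f : U -> R) :
  sumR (map g l) f = sumR l (fun x => f (g x)).
Proof. by elim: l => //= x l ->. Qed.

Lemma sumR_ex_RInt (T : Type) (l : seq T) (f : T -> R -> R) a b :
  (forall x, ex_RInt (f x) a b) -> ex_RInt (fun u => sumR l (fun x => f x u)) a b.
Proof.
move=> H; elim: l => /= [|x l IH].
- apply: (@ex_RInt_const R_CompleteNormedModule).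
- apply: (@ex_RInt_plus R_CompleteNormedModule); [apply H | apply IH].
Qed.

Lemma sumR_RInt (T : Type) (l : seq T) (f : T -> R -> R) a b :
  (forall x, ex_RInt (f x) a b) ->
  RInt (fun u => sumR l (fun x => f x u)) a b = sumR l (fun x => RInt (f x) a b).
Proof.
move=> H; elim: l => /= [|x l IH].
- rewrite (@RInt_const R_CompleteNormedModule) /scal /= /mult /=; lra.
- rewrite (@RInt_plus R_CompleteNormedModule (f x) (fun u => sumR l (fun y => f y u))) //.
  + by rewrite IH.
  + exact: sumR_ex_RInt.
Qed.

Lemma sumR_cont (T : Type) (l : seq T) (f : T -> R -> R) t :
  (forall x, continuous (f x) t) -> continuous (fun u => sumR l (fun x => f x u)) t.
Proof.
move=> H; elim: l => /= [|x l IH].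
- apply: continuous_const.
- apply: (@continuous_plus R_UniformSpace R_AbsRing R_NormedModule (f x)); [apply H | apply IH].
Qed.

Lemma RInt_mulr (f : R -> R) a b c : ex_RInt f a b -> RInt (fun u => f u * c) a b = RInt f a b * c.
Proof.
move=> H. rewrite (RInt_ext (fun u => f u * c) (fun u => scal c (f u))).
  by rewrite (RInt_scal (V:=R_CompleteNormedModule)) // /scal /= /mult /= Rmult_comm.
by move=> x _; rewrite /scal /= /mult /= Rmult_comm.
Qed.

Section Markov.
Variable X : finType.
Implicit Types (s : state X) (C : {set X}).

Lemma ptrans_cont n C s s' t : continuous (fun t => ptrans n C t s s') t.
Proof.
elim: n s t => [|n IH] s t /=.
- apply: (@continuous_mult R_UniformSpace R_AbsRing (fun _ => b2R (s == s')) (fun t => exp (- rate s C * t))).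
  + apply: continuous_const.
  + apply: cont_expl.
- apply: (@continuous_plus R_UniformSpace R_AbsRing R_NormedModule
     (fun t => b2R (s == s') * exp (- rate s C * t))).
  + apply: (@continuous_mult R_UniformSpace R_AbsRing (fun _ => b2R (s == s')) (fun t => exp (- rate s C * t))).
    * apply: continuous_const.
    * apply: cont_expl.
  + apply: sumR_cont => p.
    exact (@conv_cont (fun x => ptrans n C x (Defs.merge s p) s') (rate s C) (fun x => IH _ _) t).
Qed.

Lemma ptrans_shift_cont n C s s' t c x :
  continuous (fun u => exp (c * u) * ptrans n C (t - u) s s') x.
Proof.
apply: (@continuous_mult R_UniformSpace R_AbsRing (fun u => exp (c * u)) (fun u => ptrans n C (t - u) s s')).
- apply: cont_expl.
- apply: (cont_shift (P := fun x => ptrans n C x s s')) => y; apply: ptrans_cont.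
Qed.

Definition E n C t (h : state X -> R) s := sumR (all_states X) (fun s' => ptrans n C t s s' * h s').

Lemma all_statesP s : s \in all_states X.
Proof. by rewrite /all_states mem_enum in_setT. Qed.
Lemma all_states_uniq : uniq (all_states X).
Proof. exact: enum_uniq. Qed.

Lemma E_rec n C t h s : E n.+1 C t h s = exp (- rate s C * t) * h s +
  sumR (pairs_in s C) (fun p => RInt (fun u => exp (- rate s C * u) * E n C (t - u) h (Defs.merge s p)) 0 t).
Proof.
rewrite /E /=.
rewrite (@sumR_ext _ _ _ (fun s' => b2R (s == s') * (exp (- rate s C * t) * h s') +
   sumR (pairs_in s C) (fun p => RInt (fun u => exp (- rate s C * u) * ptrans n C (t - u) (Defs.merge s p) s') 0 t * h s'))); last first.
  by move=> s'; rewrite Rmult_plus_distr_r -sumR_mulr; lra.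
rewrite sumR_add sumR_delta ?all_statesP ?all_states_uniq //; congr (_ + _).
rewrite sumR_swap; apply: sumR_ext => p.
rewrite (@sumR_ext _ _ _ (fun s' => RInt (fun u => exp (- rate s C * u) * ptrans n C (t - u) (Defs.merge s p) s' * h s') 0 t)); last first.
  move=> s'; rewrite RInt_mulr //; apply: cont_ex_RInt => x; apply: ptrans_shift_cont.
rewrite -sumR_RInt; last first.
  move=> s'; apply: cont_ex_RInt => x.
  apply: (@continuous_mult R_UniformSpace R_AbsRing _ (fun _ => h s')).
  + apply: ptrans_shift_cont.
  + apply: continuous_const.
apply: RInt_ext => x _; rewrite -sumR_mull; apply: sumR_ext => s'; lra.
Qed.

Definition Rt n (h : state X -> R) s := sumR (all_states X) (fun sf => proot n s sf * h sf).

Lemma Rt0 h s : Rt 0 h s = h s.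
Proof. by rewrite /Rt /= sumR_delta ?all_statesP ?all_states_uniq. Qed.

Lemma Rt_rec n h s : Rt n.+1 h s = if pairs_in s setT is [::] then h s else
   sumR (pairs_in s setT) (fun p => / rate s setT * Rt n h (Defs.merge s p)).
Proof.
rewrite /Rt /=; case: (pairs_in s setT) => [|p ps].
  by rewrite sumR_delta ?all_statesP ?all_states_uniq.
rewrite (@sumR_ext _ _ _ (fun sf => sumR (p :: ps) (fun q => / rate s setT * (proot n (Defs.merge s q) sf * h sf)))); last first.
  by move=> sf; rewrite -sumR_mulr; apply: sumR_ext => q; lra.
rewrite sumR_swap; apply: sumR_ext => q; by rewrite sumR_mull.
Qed.

Definition G (Es : seq {set X}) (len : {set X} -> R) h s :=
  sumR (all_states X) (fun sf => run Es len s sf * h sf).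

Lemma G_nil len h s : G [::] len h s = Rt #|X| h s.
Proof. by []. Qed.

Lemma G_cons C Es len h s : G (C :: Es) len h s = E #|X| C (len C) (G Es len h) s.
Proof.
rewrite /G /E /=.
rewrite (@sumR_ext _ _ _ (fun sf => sumR (all_states X) (fun s' => ptrans #|X| C (len C) s s' * (run Es len s' sf * h sf)))); last first.
  by move=> sf; rewrite -sumR_mulr; apply: sumR_ext => s'; by rewrite Rmult_assoc.
rewrite sumR_swap; apply: sumR_ext => s'; by rewrite sumR_mull.
Qed.

Lemma msc_probE (sg : rmtree X) T : msc_prob sg T =
  G (sort (fun A B : {set X} => (#|A| <= #|B|)%N) (internal_edges (rtop sg))) (rlen sg)
    (fun sf => b2R (unroot sf.2 == T)) (init_state X).
Proof. by []. Qed.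

End Markov.


Lemma count_enum (T : finType) (A : {set T}) (P : pred T) :
  count P (enum A) = #|[set x in A | P x]|.
Proof.
rewrite cardE -size_filter; apply: perm_size; apply: uniq_perm.
- by rewrite filter_uniq ?enum_uniq.
- exact: enum_uniq.
- by move=> x; rewrite mem_filter !mem_enum inE andbC.
Qed.

Section Comb.
Variable X : finType.
Implicit Types (s : state X) (C A B : {set X}).

Definition Part s := (forall A, A \in s.1 -> A != set0) /\
  (forall A B, A \in s.1 -> B \in s.1 -> A != B -> [disjoint A & B]).

Lemma pairs_inP s C p : p \in pairs_in s C -> exists A B,
  [/\ A \in s.1, B \in s.1, A != B, A \subset C & B \subset C] /\ p = [set A; B].
Proof.
rewrite /pairs_in mem_enum inE => /andP[/cards2P[A [B [ne ->]]] sub].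
exists A, B; split => //.
have hA : A \in lineages_in s C by apply: (subsetP sub); rewrite !inE eqxx.
have hB : B \in lineages_in s C by apply: (subsetP sub); rewrite !inE eqxx orbT.
move: hA hB; rewrite !inE => /andP[-> ->] /andP[-> ->]; by split.
Qed.

Lemma bigcup2 A B : \bigcup_(a in [set A; B]) a = A :|: B.
Proof.
apply/setP => x; apply/bigcupP/setUP.
- by case=> a; rewrite !inE => /orP[] /eqP -> Hx; [left|right].
- by case=> Hx; [exists A | exists B]; rewrite ?inE ?eqxx ?orbT.
Qed.

Lemma merge_pair s A B :
  Defs.merge s [set A; B] = (A :|: B |: (s.1 :\: [set A; B]), A :|: B |: s.2).
Proof. by rewrite /Defs.merge bigcup2. Qed.

Lemma disj_sub_empty A B : [disjoint A & B] -> A \subset B -> A = set0.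
Proof. move=> d s; rewrite -(setIidPl s); exact: disjoint_setI0. Qed.

Lemma U_notin s A B : Part s -> A \in s.1 -> B \in s.1 -> A != B -> A :|: B \notin s.1.
Proof.
move=> [ne dj] hA hB nAB; apply/negP => hU.
have [eUA|nUA] := eqVneq (A :|: B) A.
- have : B \subset A by rewrite -eUA subsetUr.
  have := dj _ _ hB hA; rewrite eq_sym nAB => /(_ isT) d s'.
  by move: (ne _ hB); rewrite (disj_sub_empty d s') eqxx.
- have := dj _ _ hA hU; rewrite eq_sym nUA => /(_ isT) d.
  by move: (ne _ hA); rewrite (disj_sub_empty d (subsetUl A B)) eqxx.
Qed.

Lemma Part_merge s A B : Part s -> A \in s.1 -> B \in s.1 -> A != B ->
  Part (Defs.merge s [set A; B]).
Proof.
move=> [ne dj] hA hB nAB; rewrite merge_pair; split => /=.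
- move=> D; rewrite !inE => /orP[/eqP ->|/andP[_ hD]]; last exact: ne.
  apply/negP => /eqP e; move: (ne _ hA); rewrite -subset0 -e subsetUl.
  by [].
- have dU : forall D, D \in s.1 -> D \notin [set A; B] -> [disjoint A :|: B & D].
    move=> D hD; rewrite !inE negb_or => /andP[nDA nDB].
    rewrite -setI_eq0 setIUl; apply/eqP.
    rewrite (disjoint_setI0 (dj _ _ hA hD _)) ?(disjoint_setI0 (dj _ _ hB hD _)) ?setU0 //.
    by rewrite eq_sym. by rewrite eq_sym.
  move=> D1 D2; rewrite !inE => /orP[/eqP ->|/andP[n1 h1]] /orP[/eqP ->|/andP[n2 h2]].
  + by rewrite eqxx.
  + by move=> _; apply: dU; rewrite ?inE.
  + by move=> _; rewrite disjoint_sym; apply: dU; rewrite ?inE.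
  + exact: dj.
Qed.

Lemma card_merge_gen (L : {set {set X}}) A B : A \in L -> B \in L -> A != B -> A :|: B \notin L ->
  (#|A :|: B |: (L :\: [set A; B])|).+1 = #|L|.
Proof.
move=> hA hB nAB nU.
have sub : [set A; B] \subset L by apply/subsetP => x; rewrite !inE => /orP[] /eqP ->.
rewrite cardsU1 cardsDS // cards2 nAB.
have -> : A :|: B \notin L :\: [set A; B] by rewrite inE negb_and nU orbT.
have : (2 <= #|L|)%N by have := subset_leq_card sub; rewrite cards2 nAB.
by case: #|L| => [|[|m]] //= _; rewrite subn2.
Qed.

Lemma lin_merge s C A B : Part s -> A \in s.1 -> B \in s.1 -> A != B ->
  A \subset C -> B \subset C ->
  (#|lineages_in (Defs.merge s [set A; B]) C|).+1 = #|lineages_in s C|.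
Proof.
move=> P hA hB nAB sA sC.
have -> : lineages_in (Defs.merge s [set A; B]) C =
   A :|: B |: (lineages_in s C :\: [set A; B]).
  apply/setP => D; rewrite merge_pair !inE.
  case: (D =P A :|: B) => [->|_] /=; first by rewrite subUset sA sC.
  by rewrite andbA.
apply: card_merge_gen; rewrite ?inE ?hA ?hB ?sA ?sC //.
by rewrite negb_and (U_notin P hA hB nAB).
Qed.

Lemma card_merge1 s A B : Part s -> A \in s.1 -> B \in s.1 -> A != B ->
  (#|(Defs.merge s [set A; B]).1|).+1 = #|s.1|.
Proof.
move=> P hA hB nAB; rewrite merge_pair /=; apply: card_merge_gen => //.
exact: U_notin.
Qed.

Lemma size_pairs s C : INR (size (pairs_in s C)) = rate s C.
Proof.
rewrite /pairs_in /rate -cardE -cards_draws; apply: f_equal; apply: eq_card => p.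
by rewrite !inE andbC.
Qed.

Lemma unroot_U1 U (Gs : {set {set X}}) :
  unroot (U |: Gs) = if (1 < #|U|)%N && (1 < #|~: U|)%N then split_of U |: unroot Gs else unroot Gs.
Proof.
apply/setP => S; rewrite /unroot; case: ifP => HU.
- rewrite !inE; apply/imsetP/idP.
  + case=> D; rewrite !inE => /andP[/orP[/eqP ->|hD] hP] ->; first by rewrite eqxx.
    by apply/orP; right; apply/imsetP; exists D; rewrite ?inE ?hD.
  + case/orP => [/eqP ->|/imsetP[D hD ->]]; first by exists U; rewrite ?inE ?eqxx.
    by exists D => //; move: hD; rewrite !inE => /andP[-> ->]; rewrite orbT.
- apply/imsetP/imsetP.
  + case=> D; rewrite !inE => /andP[/orP[/eqP ->|hD] hP] ->; first by rewrite HU in hP.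
    by exists D; rewrite ?inE ?hD.
  + case=> D; rewrite !inE => /andP[hD hP] ->; by exists D; rewrite ?inE ?hD ?orbT.
Qed.

End Comb.


Section Good.
Variable X : finType.
Hypothesis hX : #|X| = 4%N.
Implicit Types (s : state X) (C A B : {set X}).

Definition Good1 s S := [/\ Part s, (#|s.1| <= 3)%N, unroot s.2 = [set S] &
  forall A B, A \in s.1 -> B \in s.1 -> A != B -> #|A :|: B| = 2%N -> split_of (A :|: B) = S].

Lemma disj_card A B : [disjoint A & B] -> #|A :|: B| = (#|A| + #|B|)%N.
Proof. by move=> d; rewrite cardsU (disjoint_setI0 d) cards0 subn0. Qed.

Lemma Part_card2 s D1 D2 : Part s -> D1 \in s.1 -> D2 \in s.1 -> D1 != D2 ->
  #|D1 :|: D2| = (#|D1| + #|D2|)%N /\ (0 < #|D1|)%N /\ (0 < #|D2|)%N.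
Proof.
move=> [ne dj] h1 h2 n12; split; first by apply: disj_card; apply: dj.
by rewrite !card_gt0 !ne.
Qed.

Lemma split_ofC A : split_of (~: A) = split_of A.
Proof. by rewrite /split_of setCK setUC. Qed.

Lemma cardC2 A : #|A| = 2%N -> #|~: A| = 2%N.
Proof. by move=> h; have := cardsC A; rewrite hX h; lia. Qed.

Lemma Good1_merge s S C p : Good1 s S -> p \in pairs_in s C -> Good1 (Defs.merge s p) S.
Proof.
move=> [P c u pr] /pairs_inP [A [B [[hA hB nAB _ _] ->]]].
have P' := Part_merge P hA hB nAB.
have cU := Part_card2 P hA hB nAB.
split => //.
- have := card_merge1 P hA hB nAB. lia.
- rewrite merge_pair /= unroot_U1 u; case: ifP => // /andP[h1 h2].
  have hU : #|A :|: B| = 2%N.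
    have := cardsC (A :|: B); rewrite hX. lia.
  by rewrite (pr _ _ hA hB nAB hU) setUid.
- move: P'; rewrite merge_pair => P' D1 D2 /[dup] h1 + /[dup] h2 + n12 h12 /=.
  have := Part_card2 P' h1 h2 n12; rewrite h12 => cD.
  rewrite !inE => /orP[/eqP e1|/andP[_ o1]] /orP[/eqP e2|/andP[_ o2]].
  + by rewrite e1 e2 eqxx in n12.
  + move: cD; rewrite e1. lia.
  + move: cD; rewrite e2. lia.
  + exact: pr.
Qed.

Lemma lin_init C : lineages_in (init_state X) C = [set [set x] | x in C].
Proof.
apply/setP => D; rewrite !inE; apply/andP/imsetP.
- by case=> /imsetP [x _ ->]; rewrite sub1set => hx; exists x.
- by case=> x hx ->; split; [apply/imsetP; exists x | rewrite sub1set].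
Qed.

Lemma Part_init : Part (init_state X).
Proof.
split => /=.
- by move=> D /imsetP [x _ ->]; apply/set0Pn; exists x; rewrite inE.
- move=> D1 D2 /imsetP [x _ ->] /imsetP [y _ ->] nxy.
  rewrite disjoints1 inE; apply/negP => /eqP e; by rewrite e eqxx in nxy.
Qed.

Lemma card_init : #|(init_state X).1| = #|X|.
Proof. by rewrite /= card_imset //; apply: set1_inj. Qed.

Lemma pairs_init C p : p \in pairs_in (init_state X) C ->
  exists u v, [/\ u != v, u \in C, v \in C & p = [set [set u]; [set v]]].
Proof.
move=> /pairs_inP [A [B [[/imsetP[u _ ->] /imsetP[v _ ->] n sA sB] ->]]].
exists u, v; split => //; last by rewrite -sub1set.
- by apply/negP => /eqP e; rewrite e eqxx in n.
- by rewrite -sub1set.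
Qed.

Lemma unroot_singletons : unroot [set [set x] | x : X] = set0.
Proof.
apply/setP => S; rewrite inE; apply/imsetP => [[D]]; rewrite inE => /andP[/imsetP[x _ ->]].
by rewrite cards1.
Qed.

Lemma nat_contra (a b : nat) : (2 = b + a)%N -> (2 <= b)%N -> (0 < a)%N -> False.
Proof. lia. Qed.
Lemma nat_contra' (a b : nat) : (2 = a + b)%N -> (2 <= b)%N -> (0 < a)%N -> False.
Proof. lia. Qed.

Lemma Good1_init C p : p \in pairs_in (init_state X) C ->
  Good1 (Defs.merge (init_state X) p) (split_of (\bigcup_(a in p) a)).
Proof.
move=> /[dup] Hp /pairs_init [u [v [nuv hu hv ->]]].
rewrite bigcup2.
have hu' : [set u] \in (init_state X).1 by apply/imsetP; exists u.
have hv' : [set v] \in (init_state X).1 by apply/imsetP; exists v.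
have nuv' : [set u] != [set v] by apply/negP => /eqP /set1_inj e; rewrite e eqxx in nuv.
have P' := Part_merge Part_init hu' hv' nuv'.
have cU : #|[set u] :|: [set v]| = 2%N by rewrite -/[set u; v] cards2 nuv.
split => //.
- by have := card_merge1 Part_init hu' hv' nuv'; rewrite card_init hX => [[->]].
- rewrite merge_pair /= unroot_U1 cU (cardC2 cU) /= unroot_singletons.
  by rewrite /split_of setU0.
- move: P'; rewrite merge_pair => P' D1 D2 /[dup] h1 + /[dup] h2 + n12 h12 /=.
  have := Part_card2 P' h1 h2 n12; rewrite h12 => cD.
  rewrite !inE => /orP[/eqP e1|/andP[o1 i1]] /orP[/eqP e2|/andP[o2 i2]].
  + by rewrite e1 e2 eqxx in n12.
  + by case: cD => c1 [_ c2]; exfalso; apply: (nat_contra c1) => //; rewrite e1 cU.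
  + by case: cD => c1 [c2 _]; exfalso; apply: (nat_contra' c1) => //; rewrite e2 cU.
  + case/imsetP: i1 => z _ ez; case/imsetP: i2 => w _ ew.
    move: o1 o2; rewrite ez ew ?inE ?negb_or => /andP[zu zv] /andP[wu wv].
    have eq : [set z] :|: [set w] = ~: ([set u] :|: [set v]).
      apply/eqP; rewrite eqEcard (cardC2 cU) -h12 ez ew leqnn andbT.
      apply/subsetP => x; rewrite !inE => /orP[] /eqP ->; rewrite negb_or.
      * by apply/andP; split; [apply: contraNneq zu => -> | apply: contraNneq zv => ->].
      * by apply/andP; split; [apply: contraNneq wu => -> | apply: contraNneq wv => ->].
    by rewrite eq split_ofC.
Qed.

End Good.


Section Values.
Variable X : finType.
Hypothesis hX : #|X| = 4%N.
Implicit Types (s : state X) (C A B : {set X}).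

Definition agree T (h : state X -> R) := forall s S, Good1 s S -> h s = b2R ([set S] == T).

Lemma E0 C t h s : E 0 C t h s = exp (- rate s C * t) * h s.
Proof.
rewrite /E /= (@sumR_ext _ _ _ (fun s' => b2R (s == s') * (exp (- rate s C * t) * h s'))).
  by rewrite sumR_delta ?all_statesP ?all_states_uniq.
by move=> s'; rewrite Rmult_assoc.
Qed.

Lemma lin_rate s C : (#|lineages_in s C| <= 1)%N -> rate s C = 0.
Proof. by move=> h; rewrite /rate bin_small //; apply: leq_ltn_trans h _. Qed.

Lemma rate_nz s C p : p \in pairs_in s C -> rate s C <> 0.
Proof.
move=> Hp; rewrite -size_pairs; apply: not_0_INR.
by case: (pairs_in s C) Hp.
Qed.

Lemma Rt_good n T h : agree T h -> agree T (Rt n h).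
Proof.
move=> Hh; elim: n => [|n IH] s S G1; first by rewrite Rt0; apply: Hh.
rewrite Rt_rec; case Ep: (pairs_in s setT) => [|p ps]; first exact: Hh.
have hp : p \in pairs_in s setT by rewrite Ep mem_head.
rewrite -Ep (@sumR_ext_in _ _ _ (fun _ => / rate s setT * b2R ([set S] == T))); last first.
  by move=> q Hq; rewrite (IH _ S) //; apply: Good1_merge Hq.
rewrite sumR_const size_pairs; field; exact: rate_nz hp.
Qed.

Lemma E_good C T h : agree T h -> forall n s S t, Good1 s S ->
  (#|lineages_in s C| <= n.+1)%N -> E n C t h s = b2R ([set S] == T).
Proof.
move=> Hh; elim=> [|n IH] s S t G1 hl.
  by rewrite E0 lin_rate // Ropp_0 Rmult_0_l exp_0 Rmult_1_l; apply: Hh.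
rewrite E_rec (Hh _ _ G1).
rewrite (@sumR_ext_in _ _ _ (fun _ => b2R ([set S] == T) * (1 - exp (- rate s C * t)) / rate s C)); last first.
  move=> p Hp.
  rewrite (@RInt_ext _ _ (fun u => exp (- rate s C * u) * b2R ([set S] == T))); last first.
    move=> u _; congr (_ * _); apply: (IH _ S); first by apply: Good1_merge Hp.
    case: G1 => P _ _ _.
    case/pairs_inP: Hp => [A [B [[hA hB nAB sA sB] ->]]].
    by have := lin_merge P hA hB nAB sA sB; lia.
  by rewrite RInt_exp_const //; apply: rate_nz Hp.
rewrite sumR_const size_pairs.
case: (Req_dec (rate s C) 0) => [->|nz]; last by field.
by rewrite Ropp_0 Rmult_0_l exp_0; lra.
Qed.

Definition Q C T := sumR (pairs_in (init_state X) C)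
  (fun p => b2R ([set split_of (\bigcup_(a in p) a)] == T)).

Lemma rate_init C : rate (init_state X) C = INR 'C(#|C|, 2).
Proof. by rewrite /rate lin_init card_imset //; apply: set1_inj. Qed.

Lemma E_init n C t T h : agree T h -> (2 <= #|C|)%N -> (#|C| <= n.+2)%N ->
  E n.+1 C t h (init_state X) = exp (- rate (init_state X) C * t) * h (init_state X) +
     (1 - exp (- rate (init_state X) C * t)) / rate (init_state X) C * Q C T.
Proof.
move=> Hh c2 cn.
have nz : rate (init_state X) C <> 0.
  rewrite rate_init; apply: not_0_INR; by apply/eqP; rewrite -lt0n bin_gt0.
rewrite E_rec /Q -sumR_mull; congr (_ + _); apply: sumR_ext_in => p Hp.
rewrite (@RInt_ext _ _ (fun u => exp (- rate (init_state X) C * u) *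
    b2R ([set split_of (\bigcup_(a in p) a)] == T))); last first.
  move=> u _; congr (_ * _); apply: (E_good (C:=C) Hh (t - u) (Good1_init hX Hp)).
  case/pairs_inP: (Hp) => [A [B [[hA hB nAB sA sB] ep]]].
  have := lin_merge (Part_init X) hA hB nAB sA sB; rewrite -ep lin_init card_imset; last exact: set1_inj.
  lia.
rewrite RInt_exp_const //; field; exact: nz.
Qed.

Lemma Rt_init n T h : agree T h -> Rt n.+1 h (init_state X) = / 6 * Q setT T.
Proof.
move=> Hh.
have r6 : rate (init_state X) setT = 6.
  by rewrite rate_init cardsT hX /=; lra.
rewrite Rt_rec /Q; case Ep: (pairs_in (init_state X) setT) => [|p ps].
  by have := size_pairs (init_state X) setT; rewrite Ep r6 /=; lra.
rewrite -Ep -sumR_mull; apply: sumR_ext_in => q Hq.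
by rewrite r6 (Rt_good n Hh (Good1_init hX Hq)).
Qed.

End Values.

Local Close Scope R_scope.

Ltac is_natprop T := lazymatch T with
 | @eq ?U _ _ => unify U nat
 | is_true (leq _ _) => idtac
 | ~ (@eq ?U _ _) => unify U nat
 end.
Ltac clean_nat := repeat match goal with H : ?T |- _ => tryif is_natprop T then fail else clear H end.
Ltac nlia := clean_nat; lia.

Lemma two_perm (T : eqType) (l : seq T) a b : a != b -> perm_eq l [:: a; b] ->
  l = [:: a; b] \/ l = [:: b; a].
Proof.
move=> nab pl; have sz := perm_size pl; have ul : uniq l by rewrite (perm_uniq pl) /= inE nab.
case: l sz pl ul => [|x [|y [|z l]]] //= _ pl /andP[]; rewrite inE => nxy _.
have hx : x \in [:: a; b] by rewrite -(perm_mem pl) mem_head.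
have hy : y \in [:: a; b] by rewrite -(perm_mem pl) !inE eqxx orbT.
move: hx hy nxy; rewrite !inE => /orP[]/eqP-> /orP[]/eqP->; rewrite ?eqxx //= => _.
- by left.
- by right.
Qed.

Section Classify.
Variable X : finType.
Hypothesis hX : #|X| = 4%N.
Implicit Types (C A B D : {set X}).

Lemma sub_eq C D : C \subset D -> (#|D| <= #|C|)%N -> C = D.
Proof. by move=> s c; apply/eqP; rewrite eqEcard s c. Qed.

Lemma disj_subC C D : [disjoint C & D] -> C \subset ~: D.
Proof. by rewrite -disjoints_subset. Qed.

Lemma card_sub C D : C \subset D -> (#|C| <= #|D|)%N.
Proof. exact: subset_leq_card. Qed.

Lemma card_le4 C : (#|C| <= 4)%N.
Proof. by rewrite -hX max_card. Qed.

Lemma card_setT4 : #|[set: X]| = 4%N.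
Proof. by rewrite cardsT. Qed.

Lemma card_ne_setT C : C != setT -> (#|C| <= 3)%N.
Proof.
move=> n; have : C \proper setT by rewrite properEneq n subsetT.
by move/proper_card; rewrite card_setT4.
Qed.

Lemma compl_of A B : [disjoint A & B] -> A :|: B = setT -> B = ~: A.
Proof.
move=> d u; apply/setP => x; rewrite inE.
have hx : x \in A :|: B by rewrite u inE.
case: (boolP (x \in A)) => xa /=.
- by rewrite (disjointFr d xa).
- by move: hx; rewrite inE (negbTE xa).
Qed.

Definition Iset (H : {set {set X}}) := [set C | internal_edge H C].

Lemma classify H : rooted_binary H ->
  (exists A B, [/\ #|A| = 2%N, #|B| = 3%N, A \subset B & Iset H = [set A; B]]) \/
  (exists A, #|A| = 2%N /\ Iset H = [set A; ~: A]).
Proof.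
case=> hT h1 h0 lam spl.
have inI : forall C, (C \in Iset H) = [&& C \in H, (1 < #|C|)%N & C != setT].
  by move=> C; rewrite inE.
have nonempty : forall C, C \in H -> (0 < #|C|)%N.
  move=> C hC; rewrite card_gt0; apply/negP => /eqP e; by rewrite -e hC in h0.
have lamP : forall C D, C \in H -> D \in H ->
    [\/ C \subset D, D \subset C | C \subset ~: D].
  move=> C D hC hD; case/or3P: (lam _ _ hC hD) => ?; [by constructor 1|by constructor 2|].
  by constructor 3; apply: disj_subC.
have := spl _ hT; rewrite card_setT4 => /(_ isT) [A0 [B0 [hA0 hB0 d0 u0]]].
have eB0 := compl_of d0 u0.
have cA0 := cardsC A0; rewrite hX -eB0 in cA0.
have pA0 := nonempty _ hA0; have pB0 := nonempty _ hB0.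
have Ibnd : forall C, C \in Iset H -> (1 < #|C|)%N /\ (#|C| <= 3)%N /\ C \in H.
  by move=> C; rewrite inI => /and3P[? ? ?]; split => //; split => //; apply: card_ne_setT.
have sub_setT : forall C, C \in Iset H -> ~~ (setT \subset C).
  move=> C; rewrite inI => /and3P[_ _ n]; apply/negP => s.
  by move: n; rewrite eqEsubset subsetT s.
have [c2|c2] := boolP (#|A0| == 2%N).
- right; exists A0; move/eqP: c2 => c2; split; first exact: c2.
  rewrite -eB0; apply/setP => C; rewrite in_set2.
  apply/idP/idP.
  + move=> hI; have [l1 [l3 hC]] := Ibnd C hI.
    case: (lamP _ _ hC hA0) => s.
    * apply/orP; left; apply/eqP; apply: sub_eq s _; nlia.
    * case: (lamP _ _ hC hB0) => s'.
      -- by move: pA0; rewrite (disj_sub_empty d0 (subset_trans s s')) cards0.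
      -- by move: (sub_setT _ hI); rewrite -u0 subUset s s'.
      -- apply/orP; left; apply/eqP; symmetry; apply: sub_eq s _.
         by move: s'; rewrite eB0 setCK => /card_sub.
    * apply/orP; right; apply/eqP; rewrite eB0; apply: sub_eq s _.
      rewrite -eB0; nlia.
  + case/orP => /eqP ->; rewrite inI ?hA0 ?hB0 /=.
    * rewrite c2 /=; apply/negP => /eqP e; move: c2; rewrite e card_setT4.
      by [].
    * apply/andP; split; first nlia.
      apply/negP => /eqP e; move: cA0; rewrite e card_setT4; nlia.
- left.
  have [B1 [w1 [[hB1 hw1 cB1 cw1] [dB1 uB1]]]] : exists B1 W, [/\ B1 \in H, W \in H, #|B1| = 3%N &
      #|W| = 1%N] /\ ([disjoint B1 & W] /\ B1 :|: W = setT).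
    have : (#|A0| == 1)%N || (#|A0| == 3)%N by move: c2 cA0 pA0 pB0; clear; nlia.
    case/orP => /eqP cc.
    + exists B0, A0; split; first by split => //; nlia.
      by rewrite disjoint_sym setUC.
    + by exists A0, B0; split => //; split => //; nlia.
  have eW := compl_of dB1 uB1.
  have := spl _ hB1; rewrite cB1 => /(_ isT) [A2 [B2 [hA2 hB2 d2 u2]]].
  have pA2 := nonempty _ hA2; have pB2 := nonempty _ hB2.
  have c3 : (#|A2| + #|B2| = 3)%N by rewrite -cB1 -u2 disj_card.
  have [A [z [[hA hz cA cz] [dA uA]]]] : exists A Z, [/\ A \in H, Z \in H, #|A| = 2%N &
      #|Z| = 1%N] /\ ([disjoint A & Z] /\ A :|: Z = B1).
    have : (#|A2| == 2)%N || (#|B2| == 2)%N by move: c3 pA2 pB2; clear; nlia.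
    case/orP => /eqP cc.
    + by exists A2, B2; split => //; split => //; nlia.
    + exists B2, A2; split; first by split => //; nlia.
      by rewrite disjoint_sym setUC.
  have sAB : A \subset B1 by rewrite -uA subsetUl.
  exists A, B1; split => //.
  apply/setP => C; rewrite in_set2; apply/idP/idP.
  + move=> hI; have [l1 [l3 hC]] := Ibnd C hI.
    case: (lamP _ _ hC hB1) => s.
    * case: (lamP _ _ hC hA) => s'.
      -- apply/orP; left; apply/eqP; apply: sub_eq s' _; nlia.
      -- have [e|ne] := eqVneq #|C| 2%N.
         ++ apply/orP; left; apply/eqP; symmetry; apply: sub_eq s' _; nlia.
         ++ move/eqP: ne => ne; apply/orP; right; apply/eqP; apply: sub_eq s _; nlia.
      -- have : C \subset z.
           apply/subsetP => x hx; have := subsetP s _ hx; rewrite -uA inE.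
           by case/orP => // xa; move: (subsetP s' _ hx); rewrite inE xa.
         move/card_sub; nlia.
    * apply/orP; right; apply/eqP; symmetry; apply: sub_eq s _; nlia.
    * by move: s; rewrite -eW => /card_sub; nlia.
  + case/orP => /eqP ->; rewrite inI ?hA ?hB1 /=.
    * rewrite cA /=; apply/negP => /eqP e; move: cA; rewrite e card_setT4. by [].
    * rewrite cB1 /=; apply/negP => /eqP e; move: cB1; rewrite e card_setT4. by [].
Qed.

End Classify.

Local Open Scope R_scope.

Section Qsec.
Variable X : finType.
Hypothesis hX : #|X| = 4%N.
Implicit Types (C A B D : {set X}).

Definition sing (B : {set X}) : {set {set X}} := [set [set x] | x in B].

Lemma sing_mem B x : ([set x] \in sing B) = (x \in B).
Proof. by rewrite /sing mem_imset //; exact: set1_inj. Qed.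

Lemma sing_inj : injective sing.
Proof. by move=> B1 B2 e; apply/setP => x; rewrite -(sing_mem B1) -(sing_mem B2) e. Qed.

Lemma bigcup_sing (B : {set X}) : \bigcup_(a in sing B) a = B :> {set X}.
Proof.
apply/setP => x; apply/bigcupP/idP.
- by case=> a; rewrite /sing => /imsetP [y hy ->]; rewrite inE => /eqP ->.
- by move=> hx; exists [set x]; [apply/imsetP; exists x | rewrite inE].
Qed.

Definition Bs (C : {set X}) : {set {set X}} := [set B : {set X} | B \subset C & #|B| == 2%N].

Lemma Q_reindex C T : Q C T = sumR (enum (Bs C)) (fun B => b2R ([set split_of B] == T)).
Proof.
rewrite /Q (@sumR_perm _ _ (map sing (enum (Bs C)))).
  by rewrite sumR_map; apply: sumR_ext => B; rewrite bigcup_sing.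
apply: uniq_perm.
- exact: enum_uniq.
- by rewrite map_inj_uniq ?enum_uniq //; apply: sing_inj.
move=> p; apply/idP/idP.
- move=> /[dup] Hp /pairs_init [u [v [nuv hu hv ep]]].
  apply/mapP; exists [set u; v].
    by rewrite mem_enum inE cards2 nuv andbT; apply/subsetP => x; rewrite !inE => /orP[]/eqP->.
  by rewrite ep /sing imsetU1 imset_set1.
- case/mapP => B; rewrite mem_enum inE => /andP [sB cB] ->.
  rewrite /pairs_in mem_enum inE lin_init /sing card_imset; last exact: set1_inj.
  by rewrite cB /=; apply: imsetS.
Qed.

Lemma Q2 C T : #|C| = 2%N -> Q C T = b2R ([set split_of C] == T).
Proof.
move=> c2; rewrite Q_reindex.
have -> : Bs C = [set C].
  apply/setP => B; rewrite !inE; apply/andP/eqP.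
  - by case=> s /eqP cB; apply: sub_eq => //; rewrite cB c2.
  - by move=> ->; rewrite subxx c2.
by rewrite enum_set1 /=; lra.
Qed.

Lemma split_eq B A : (split_of B == split_of A) = (B \in [set A; ~: A]).
Proof.
apply/eqP/idP.
- by move=> e; rewrite -/(split_of A) -e /split_of !inE eqxx.
- by rewrite !inE => /orP[]/eqP->; rewrite ?split_ofC.
Qed.

Lemma Q_count C A : #|A| = 2%N ->
  Q C [set split_of A] = INR #|[set B in [set A; ~: A] | B \subset C]|.
Proof.
move=> cA; rewrite Q_reindex.
rewrite (@sumR_ext _ _ _ (fun B => b2R (B \in [set A; ~: A]))); last first.
  by move=> B; rewrite (inj_eq set1_inj) split_eq.
rewrite sumR_b2R count_enum; congr (INR _); apply: eq_card => B; rewrite !inE.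
apply/idP/idP.
- by case/andP => /andP[-> _] ->.
- case/andP => h ->; rewrite /= h andbT.
  by case/orP: h => /eqP ->; rewrite ?(cardC2 hX) ?cA.
Qed.

Lemma A_ne_C A : #|A| = 2%N -> A != ~: A.
Proof.
move=> cA; apply/negP => /eqP e.
have : #|A :&: ~: A| = 2%N by rewrite -{1}e setIid cA.
by rewrite setICr cards0.
Qed.

Lemma Q_setT A : #|A| = 2%N -> Q setT [set split_of A] = 2.
Proof.
move=> cA; rewrite Q_count //.
have -> : [set B in [set A; ~: A] | B \subset setT] = [set A; ~: A].
  by apply/setP => B; rewrite !inE subsetT andbT.
by rewrite cards2 A_ne_C //=; lra.
Qed.

Lemma Q_three A B : #|A| = 2%N -> #|B| = 3%N -> Q B [set split_of A] = 1.
Proof.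
move=> cA cB; rewrite Q_count //.
have : #|~: B| = 1%N by have := cardsC B; rewrite hX cB; lia.
move/eqP/cards1P => [w ew].
have eB : B = ~: [set w] by rewrite -ew setCK.
have subw : forall D, (D \subset B) = (w \notin D).
  by move=> D; rewrite eB -disjoints_subset disjoint_sym disjoints1.
case: (boolP (w \in A)) => wA.
- have -> : [set D in [set A; ~: A] | D \subset B] = [set ~: A].
    apply/setP => D; rewrite !inE subw; apply/idP/idP.
    + by case/andP => /orP[]/eqP -> //; rewrite wA.
    + by move/eqP ->; rewrite eqxx orbT inE wA.
  by rewrite cards1 /=; lra.
- have -> : [set D in [set A; ~: A] | D \subset B] = [set A].
    apply/setP => D; rewrite !inE subw; apply/idP/idP.
    + by case/andP => /orP[]/eqP -> //; rewrite inE wA.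
    + by move/eqP ->; rewrite eqxx wA.
  by rewrite cards1 /=; lra.
Qed.

End Qsec.


Lemma alg_cat a b q : exp (- 1 * a) * (exp (- 3 * b) * (/ 6 * 2) + (1 - exp (- 3 * b)) / 3 * 1)
  + (1 - exp (- 1 * a)) / 1 * q = exp (- a) / 3 + (1 - exp (- a)) * q.
Proof. replace (- 1 * a) with (- a) by ring. field. Qed.

Lemma alg_bal l1 l2 K q : exp (- 1 * l1) * (exp (- 1 * l2) * K + (1 - exp (- 1 * l2)) / 1 * q)
  + (1 - exp (- 1 * l1)) / 1 * q = exp (- (l1 + l2)) * K + (1 - exp (- (l1 + l2))) * q.
Proof.
replace (- 1 * l1) with (- l1) by ring. replace (- 1 * l2) with (- l2) by ring.
replace (- (l1 + l2)) with (- l1 + - l2) by ring. rewrite exp_plus. field.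
Qed.

Section Assemble.
Variable X : finType.
Hypothesis hX : #|X| = 4%N.
Implicit Types (C A B D : {set X}).

Definition gT (T : {set {set {set X}}}) := fun sf : state X => b2R (unroot sf.2 == T).

Lemma gT_agree T : agree T (gT T).
Proof. by move=> s S [_ _ u _]; rewrite /gT u. Qed.

Lemma lin_le s C : (#|lineages_in s C| <= #|s.1|)%N.
Proof. by apply: subset_leq_card; apply/subsetP => x; rewrite inE => /andP[]. Qed.

Lemma G_agree Es len T : agree T (G Es len (gT T)).
Proof.
elim: Es => [|C Es IH] s S G1.
- by rewrite G_nil; apply: (Rt_good hX #|X| (gT_agree T) G1).
- rewrite G_cons hX; apply: (E_good hX (C:=C) IH (len C) G1).
  case: G1 => _ c _ _; have := lin_le s C; lia.
Qed.

Lemma G2 C1 C2 len T : (2 <= #|C1|)%N -> (2 <= #|C2|)%N ->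
  G [:: C1; C2] len (gT T) (init_state X) =
  exp (- rate (init_state X) C1 * len C1) *
    (exp (- rate (init_state X) C2 * len C2) * (/ 6 * Q setT T) +
     (1 - exp (- rate (init_state X) C2 * len C2)) / rate (init_state X) C2 * Q C2 T) +
  (1 - exp (- rate (init_state X) C1 * len C1)) / rate (init_state X) C1 * Q C1 T.
Proof.
move=> c1 c2.
have l1 : (#|C1| <= 5)%N by have := card_le4 hX C1; lia.
have l2 : (#|C2| <= 5)%N by have := card_le4 hX C2; lia.
rewrite G_cons hX (@E_init X hX 3 C1 (len C1) T _ (G_agree [:: C2] len T) c1 l1).
rewrite G_cons hX (@E_init X hX 3 C2 (len C2) T _ (G_agree [::] len T) c2 l2).
by rewrite G_nil hX (Rt_init hX _ (gT_agree T)).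
Qed.

Lemma rate2 C : #|C| = 2%N -> rate (init_state X) C = 1.
Proof. by move=> c; rewrite rate_init c. Qed.

Lemma rate3 C : #|C| = 3%N -> rate (init_state X) C = 3.
Proof. by move=> c; rewrite rate_init c /=; lra. Qed.

Definition sortS (l : seq {set X}) := sort (fun A B : {set X} => (#|A| <= #|B|)%N) l.

Lemma sort_two (l : seq {set X}) A B : A != B -> perm_eq l [:: A; B] ->
  sortS l = [:: A; B] \/ sortS l = [:: B; A].
Proof.
move=> nAB pl; apply: two_perm => //.
by rewrite perm_sort.
Qed.

Lemma sorted_two A B : sorted (fun A B : {set X} => (#|A| <= #|B|)%N) [:: A; B] -> (#|A| <= #|B|)%N.
Proof. by rewrite /= andbT. Qed.

Lemma sortE_sorted l : sorted (fun A B : {set X} => (#|A| <= #|B|)%N) (sortS l).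
Proof. by apply: sort_sorted => A B; apply: leq_total. Qed.

Lemma enum_two (I : {set {set X}}) A B : A != B -> I = [set A; B] -> perm_eq (enum I) [:: A; B].
Proof.
move=> nAB ->; apply: uniq_perm; first exact: enum_uniq.
  by rewrite /= inE nAB.
by move=> D; rewrite mem_enum !inE.
Qed.

End Assemble.


Section Trees.
Variable X : finType.
Hypothesis hX : #|X| = 4%N.
Implicit Types (C A B D : {set X}).

Lemma b2R_set1 (S1 S2 : {set {set X}}) : b2R ([set S1] == [set S2]) = b2R (S1 == S2).
Proof. by rewrite (inj_eq set1_inj). Qed.

Lemma unroot_in (H : {set {set X}}) S : S \in unroot H =
  [exists D, [&& D \in H, (1 < #|D|)%N, (1 < #|~: D|)%N & S == split_of D]].
Proof.
apply/imsetP/existsP.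
- by case=> D; rewrite inE => /andP[hD /andP[h1 h2]] ->; exists D; rewrite hD h1 h2 eqxx.
- by case=> D /and4P[hD h1 h2 /eqP ->]; exists D; rewrite // inE hD h1 h2.
Qed.

Lemma in_Iset (H : {set {set X}}) D : D \in H -> (1 < #|D|)%N -> (1 < #|~: D|)%N -> D \in Iset H.
Proof.
move=> hD h1 h2; rewrite inE /internal_edge hD h1 /=.
apply/negP => /eqP e; move: h2; by rewrite e setCT cards0.
Qed.

Lemma Iset_internal (H : {set {set X}}) D : D \in Iset H -> internal_edge H D.
Proof. by rewrite inE. Qed.

Lemma Iset_H (H : {set {set X}}) D : D \in Iset H -> D \in H.
Proof. by rewrite inE => /and3P[]. Qed.

Lemma tree_formula (sg : rmtree X) : valid_rmtree sg -> exists A0 L,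
  [/\ #|A0| = 2%N, 0 < L, unroot (rtop sg) = [set split_of A0], ulen sg (split_of A0) = L &
      forall A, #|A| = 2%N -> msc_prob sg [set split_of A] =
         exp (- L) / 3 + (1 - exp (- L)) * b2R (split_of A0 == split_of A)].
Proof.
case=> rb lenpos.
set H := rtop sg.
have ie : internal_edges H = enum (Iset H) by [].
case: (classify hX rb) => [[A [B [cA cB sAB eI]]]|[A [cA eI]]].
- (* caterpillar *)
  have nAB : A != B by apply/negP => /eqP e; move: cA; rewrite e cB.
  have pe := enum_two nAB eI.
  have AI : A \in Iset H by rewrite eI !inE eqxx.
  have BI : B \in Iset H by rewrite eI !inE eqxx orbT.
  have Es : sortS (enum (Iset H)) = [:: A; B].
    case: (sort_two nAB pe) => // e.
    by have := sortE_sorted (enum (Iset H)); rewrite e => /sorted_two; rewrite cA cB.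
  exists A, (rlen sg A); split.
  + exact: cA.
  + by apply: lenpos; apply: Iset_internal.
  + apply/setP => S; rewrite unroot_in inE; apply/existsP/eqP.
    * case=> D /and4P[hD h1 h2 /eqP ->].
      have : D \in Iset H by apply: in_Iset.
      rewrite eI !inE => /orP[]/eqP e //; first by rewrite e.
      by move: h2; rewrite e (_ : #|~: B| = 1%N) //; have := cardsC B; rewrite hX cB; lia.
    * move=> ->; exists A; rewrite (Iset_H AI) cA (cardC2 hX cA) eqxx.
      by [].
  + rewrite /ulen ie (sumR_perm _ pe) /= eqxx.
    have -> : (split_of B == split_of A) = false.
      rewrite split_eq !inE; apply/negP => /orP[]/eqP e.
      * by move: cB; rewrite e cA.
      * by move: cB; rewrite e (cardC2 hX cA).
    lra.
  + move=> A' cA'.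
    rewrite msc_probE -/H ie -/(sortS _) Es.
    have c2A : (2 <= #|A|)%N by rewrite cA.
    have c2B : (2 <= #|B|)%N by rewrite cB.
    rewrite -/(gT _) G2 //.
    rewrite (rate2 cA) (rate3 cB) (Q_setT hX cA') (Q_three hX cA' cB) (Q2 _ cA) b2R_set1.
    by rewrite alg_cat.
- (* balanced *)
  have nAB : A != ~: A by apply: A_ne_C.
  have pe := enum_two nAB eI.
  have cC := cardC2 hX cA.
  exists A, (rlen sg A + rlen sg (~: A)); split.
  + exact: cA.
  + have AI : A \in Iset H by rewrite eI !inE eqxx.
    have BI : ~: A \in Iset H by rewrite eI !inE eqxx orbT.
    have := lenpos _ (Iset_internal AI); have := lenpos _ (Iset_internal BI); lra.
  + apply/setP => S; rewrite unroot_in inE; apply/existsP/eqP.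
    * case=> D /and4P[hD h1 h2 /eqP ->].
      have : D \in Iset H by apply: in_Iset.
      by rewrite eI !inE => /orP[]/eqP ->; rewrite ?split_ofC.
    * have AI : A \in Iset H by rewrite eI !inE eqxx.
      move=> ->; exists A; rewrite (Iset_H AI) cA cC eqxx.
      by [].
  + rewrite /ulen ie (sumR_perm _ pe) /= eqxx split_ofC eqxx; lra.
  + move=> A' cA'.
    rewrite msc_probE -/H ie -/(sortS _).
    have c2 : (2 <= #|A|)%N by rewrite cA.
    have c2' : (2 <= #|~: A|)%N by rewrite cC.
    case: (sort_two nAB pe) => ->; rewrite -/(gT _) G2 //.
    * rewrite (rate2 cA) (rate2 cC) (Q_setT hX cA') (Q2 _ cA) (Q2 _ cC) split_ofC b2R_set1 alg_bal.
      field.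
    * rewrite (rate2 cA) (rate2 cC) (Q_setT hX cA') (Q2 _ cA) (Q2 _ cC) split_ofC b2R_set1 alg_bal.
      rewrite (Rplus_comm (rlen sg (~: A))). field.
Qed.

End Trees.


Section Final.
Variable X : finType.
Hypothesis hX : #|X| = 4%N.
Implicit Types (C A B D : {set X}).

Lemma bal_general (sg : rmtree X) A T : #|A| = 2%N -> Iset (rtop sg) = [set A; ~: A] ->
  msc_prob sg T = exp (- (rlen sg A + rlen sg (~: A))) * (/ 6 * Q setT T) +
     (1 - exp (- (rlen sg A + rlen sg (~: A)))) * b2R ([set split_of A] == T).
Proof.
move=> cA eI.
have nAB : A != ~: A by apply: A_ne_C.
have pe := enum_two nAB eI.
have cC := cardC2 hX cA.
have c2 : (2 <= #|A|)%N by rewrite cA.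
have c2' : (2 <= #|~: A|)%N by rewrite cC.
rewrite msc_probE -/(sortS _).
have ie : internal_edges (rtop sg) = enum (Iset (rtop sg)) by [].
rewrite ie; case: (sort_two nAB pe) => ->; rewrite -/(gT _) G2 //.
- by rewrite (rate2 cA) (rate2 cC) (Q2 _ cA) (Q2 _ cC) split_ofC alg_bal.
- rewrite (rate2 cA) (rate2 cC) (Q2 _ cA) (Q2 _ cC) split_ofC alg_bal.
  by rewrite (Rplus_comm (rlen sg (~: A))).
Qed.

Lemma part1 (s1 s2 : rmtree X) : valid_rmtree s1 -> valid_rmtree s2 ->
  (forall T, msc_prob s1 T = msc_prob s2 T) -> unrooted_eq s1 s2.
Proof.
move=> v1 v2 eq.
have [A1 [L1 [c1 p1 u1 l1 f1]]] := tree_formula hX v1.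
have [A2 [L2 [c2 p2 u2 l2 f2]]] := tree_formula hX v2.
have e1 : exp (- L1) < 1 by rewrite -exp_0; apply: exp_increasing; lra.
have e2 : exp (- L2) < 1 by rewrite -exp_0; apply: exp_increasing; lra.
have ep1 := exp_pos (- L1); have ep2 := exp_pos (- L2).
have hs : split_of A1 = split_of A2.
  apply/eqP; apply/negPn/negP => ne.
  have := eq [set split_of A1]; rewrite (f1 _ c1) (f2 _ c1) eqxx.
  rewrite eq_sym (negbTE ne) /b2R; lra.
have hL : L1 = L2.
  have := eq [set split_of A1]; rewrite (f1 _ c1) (f2 _ c1) hs eqxx /b2R => h.
  have : exp (- L1) = exp (- L2) by lra.
  by move/exp_inv; lra.
split; first by rewrite u1 u2 hs.
by move=> S; rewrite u1 inE => /eqP ->; rewrite l1 hs l2.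
Qed.

Lemma exists_pair : exists x y : X, x != y.
Proof.
have : (0 < #|[set A : {set X} | #|A| == 2%N]|)%N by rewrite card_draws hX.
case/card_gt0P => A; rewrite inE => /cards2P [x [y [nxy _]]].
by exists x, y.
Qed.

Lemma part2 : exists s1 s2 : rmtree X, [/\ valid_rmtree s1, valid_rmtree s2,
     ~ rmtree_eq s1 s2 & forall T, msc_prob s1 T = msc_prob s2 T].
Proof.
have [x [y nxy]] := exists_pair.
set A0 := [set x; y].
have cA : #|A0| = 2%N by rewrite cards2 nxy.
have cC := cardC2 hX cA.
have nAC := A_ne_C cA.
set Hs := setT |: (A0 |: (~: A0 |: [set [set z] | z : X])).
have inH : forall D, (D \in Hs) =
   [|| D == setT, D == A0, D == ~: A0 | D \in [set [set z] | z : X]].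
  by move=> D; rewrite !inE.
have sgl : forall D, D \in [set [set z] | z : X] -> #|D| = 1%N.
  by move=> D /imsetP [z _ ->]; rewrite cards1.
have ne0 : forall D, (0 < #|D|)%N -> D != set0.
  by move=> D; rewrite card_gt0.
have rb : rooted_binary Hs.
  split.
  - by rewrite inH eqxx.
  - by move=> z; rewrite inH; apply/or4P; constructor 4; apply/imsetP; exists z.
  - apply/negP; rewrite inH => /or4P[/eqP e|/eqP e|/eqP e|e].
    + by move: (congr1 (fun S : {set X} => x \in S) e); rewrite /= !inE.
    + by move: (congr1 (fun S : {set X} => x \in S) e); rewrite /= !inE eqxx.
    + by move: (congr1 (fun S : {set X} => #|S|) e); rewrite /= cC cards0.
    + by move: (sgl _ e); rewrite cards0.
  - have sgl_lam : forall z D, [|| [set z] \subset D, D \subset [set z] | [disjoint [set z] & D]].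
      by move=> z D; rewrite sub1set disjoints1; case: (z \in D); rewrite ?orbT.
    move=> D1 D2; rewrite !inH => h1 h2.
    case/or4P: h1 => [/eqP->|/eqP->|/eqP->|/imsetP [z _ ->]]; try exact: sgl_lam;
    case/or4P: h2 => [/eqP->|/eqP->|/eqP->|/imsetP [w _ ->]];
      rewrite ?subsetT ?orbT ?subxx //.
    + by rewrite disjoints_subset setCK subxx !orbT.
    + by case/or3P: (sgl_lam w A0) => h; rewrite ?h ?orbT // disjoint_sym h ?orbT.
    + by rewrite disjoints_subset subxx !orbT.
    + by case/or3P: (sgl_lam w (~: A0)) => h; rewrite ?h ?orbT // disjoint_sym h ?orbT.
  - move=> D; rewrite inH => /or4P[/eqP->|/eqP->|/eqP->|/sgl ->] // _.
    + exists A0, (~: A0); split; rewrite ?inH ?eqxx ?orbT //.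
      * by rewrite disjoints_subset setCK.
      * by rewrite setUCr.
    + exists [set x], [set y]; split.
      * by rewrite inH; apply/or4P; constructor 4; apply/imsetP; exists x.
      * by rewrite inH; apply/or4P; constructor 4; apply/imsetP; exists y.
      * by rewrite disjoints1 inE.
      * by [].
    + move/eqP: cC => /cards2P [z [w [nzw ez]]].
      exists [set z], [set w]; split.
      * by rewrite inH; apply/or4P; constructor 4; apply/imsetP; exists z.
      * by rewrite inH; apply/or4P; constructor 4; apply/imsetP; exists w.
      * by rewrite disjoints1 inE.
      * by rewrite ez.
have eI : Iset Hs = [set A0; ~: A0].
  apply/setP => D; rewrite in_set2 inE /internal_edge inH.
  apply/idP/idP.
  - case/and3P => /or4P[/eqP->|/eqP->|/eqP->|/sgl ->] //; first by rewrite eqxx.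
    + by rewrite eqxx.
    + by rewrite eqxx orbT.
  - case/orP => /eqP ->.
    + rewrite eqxx orbT cA /=; apply/negP => /eqP e; by move: cA; rewrite e cardsT hX.
    + rewrite eqxx !orbT cC /=; apply/negP => /eqP e; by move: cC; rewrite e cardsT hX.
pose len1 := fun D : {set X} => if D == A0 then 1 else 2.
pose len2 := fun D : {set X} => if D == A0 then 2 else 1.
have nCA : (~: A0 == A0) = false by apply/negbTE; rewrite eq_sym.
exists (RMTree Hs len1), (RMTree Hs len2); split.
- split => //= D _; rewrite /len1; case: ifP => _; lra.
- split => //= D _; rewrite /len2; case: ifP => _; lra.
- case=> _ /= /(_ A0); rewrite /internal_edge /len1 /len2 eqxx.
  have : A0 \in Iset Hs by rewrite eI !inE eqxx.
  by rewrite inE => h /(_ h); lra.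
- move=> T.
  rewrite (bal_general (sg := RMTree Hs len1) T cA eI) (bal_general (sg := RMTree Hs len2) T cA eI) /=.
  rewrite /len1 /len2 eqxx nCA.
  by rewrite (Rplus_comm 2 1).
Qed.

End Final.

Local Close Scope R_scope.

Theorem proposition2 (X : finType) (hX : #|X| = 4%N) :
  (forall s1 s2 : rmtree X, valid_rmtree s1 -> valid_rmtree s2 ->
     (forall T, msc_prob s1 T = msc_prob s2 T) -> unrooted_eq s1 s2) /\
  (exists s1 s2 : rmtree X, [/\ valid_rmtree s1, valid_rmtree s2,
     ~ rmtree_eq s1 s2 & forall T, msc_prob s1 T = msc_prob s2 T]).
Proof.
split.
- move=> s1 s2 v1 v2 e; exact: (part1 hX v1 v2 e).
- exact: (part2 hX).
Qed.
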